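(* Let $H\in(0,1)$, $W$ a fractional Brownian motion with Hurst parameter $H$, $b\in\{2,3,\dots\}$, $n\in\mathbb N$, and $0\le u\le v\le1$ with $ub^n,vb^n\in\mathbb Z$. Then for all real numbers $\mu_1,\dots,\mu_{b^{n+1}}$, $$\sum_{j=1}^{b^{n+1}}|\mu_j|\,\big|\mathbb E[(W(jb^{-n-1})-W((j-1)b^{-n-1}))(W(v)-W(u))]\big|\le\sum_{i=1}^{b^n}\Big(\max_{(i-1)b<j\le ib}|\mu_j|\Big)\big|\mathbb E[(W(ib^{-n})-W((i-1)b^{-n}))(W(v)-W(u))]\big|.$$ *)

(* Defs.v *)
From HB Require Import structures.
From mathcomp Require Import all_boot all_order all_algebra.
From mathcomp Require Import all_classical all_reals all_analysis.
Set Implicit Arguments. Unset Strict Implicit. Unset Printing Implicit Defensive.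
Import Order.TTheory GRing.Theory Num.Theory.
Local Open Scope classical_set_scope.
Local Open Scope ring_scope.

Definition fbm_cov {R : realType} (H s t : R) : R :=
  (s `^ (2 * H) + t `^ (2 * H) - `|t - s| `^ (2 * H)) / 2.

Definition centered_gaussian {d} {T : measurableType d} {R : realType}
  (P : probability T R) (X : T -> R) : Prop :=
  (forall A : set R, measurable A -> P (X @^-1` A) = \d_(0:R) A) \/
  (exists s : R, 0 < s /\
     forall A : set R, measurable A -> P (X @^-1` A) = normal_prob 0 s A).

Definition is_fBm {d} {T : measurableType d} {R : realType}
  (P : probability T R) (H : R) (W : R -> T -> R) : Prop :=
  [/\ forall t, 0 <= t -> measurable_fun setT (W t),
      forall t, 0 <= t -> W t \in Lfun P 2,
      forall s t, 0 <= s -> 0 <= t ->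
        'E_P[W s \* W t]%E = (fbm_cov H s t)%:E &
      forall (k : nat) (c : 'I_k -> R) (t : 'I_k -> R),
        (forall i, 0 <= t i) ->
        centered_gaussian P (fun w => \sum_(i < k) c i * W (t i) w)].

Definition incr_cov {d} {T : measurableType d} {R : realType}
  (P : probability T R) (W : R -> T -> R) (a b v u : R) : R :=
  fine ('E_P[(fun w => (W a w - W b w) * (W v w - W u w))%R])%E.

(* Main.v *)
Require Import Defs.
From HB Require Import structures.
From mathcomp Require Import all_boot all_order all_algebra.
From mathcomp Require Import all_classical all_reals all_analysis.
From mathcomp Require Import ring lra zify.
Import Order.TTheory GRing.Theory Num.Theory.
Local Open Scope ring_scope.

Section A.
Context {R : realType}.
Implicit Types (p x y z d : R).

Lemma mid_cvx p x y : 1 <= p -> 0 <= x -> 0 <= y ->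
  (2^-1 * x + 2^-1 * y) `^ p <= 2^-1 * x `^ p + 2^-1 * y `^ p.
Proof.
move=> p1 x0 y0.
have h2 : (2^-1 : R) = 1 - 2^-1 by rewrite {2}(splitr 1) div1r addrK.
have := (convex_powR p1 (Itv01 (x := 2^-1 : R) _ _)) x y.
move=> /= H; rewrite {2 4}h2; apply: H.
- by rewrite invr_ge0.
- by rewrite invf_le1 ?ler1n.
- by rewrite inE /= in_itv /= x0.
- by rewrite inE /= in_itv /= y0.
Qed.

Lemma mid_ccv p x y : 0 < p -> p <= 1 -> 0 <= x -> 0 <= y ->
  2^-1 * x `^ p + 2^-1 * y `^ p <= (2^-1 * x + 2^-1 * y) `^ p.
Proof.
move=> p0 p1 x0 y0.
have q1 : 1 <= p^-1 by rewrite invf_ge1.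
have := mid_cvx _ (x `^ p) (y `^ p) q1 (powR_ge0 _ _) (powR_ge0 _ _).
rewrite -!powRrM !mulfV ?gt_eqF // !powRr1 // => H.
have := ge0_ler_powR (ltW p0) _ _ H.
rewrite -powRrM mulVf ?gt_eqF // powRr1; last first.
  by rewrite addr_ge0 // mulr_ge0 ?invr_ge0 ?powR_ge0.
apply; rewrite nnegrE ?powR_ge0 //.
by rewrite addr_ge0 // mulr_ge0 ?invr_ge0.
Qed.

Definition phi p d z := (z + d) `^ p - z `^ p.

Lemma phi_step_cvx p d z : 1 <= p -> 0 <= d -> 0 <= z -> phi p d z <= phi p d (z + d).
Proof.
move=> p1 d0 z0; rewrite /phi.
have zdd : 0 <= z + d + d by rewrite !addr_ge0.
have := mid_cvx _ _ _ p1 z0 zdd.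
have -> : 2^-1 * z + 2^-1 * (z + d + d) = z + d.
  by rewrite -mulrDr (_ : z + (z + d + d) = 2 * (z + d)) ?mulKf ?pnatr_eq0 //; ring.
move=> H; lra.
Qed.

Lemma phi_step_ccv p d z : 0 < p -> p <= 1 -> 0 <= d -> 0 <= z -> phi p d (z + d) <= phi p d z.
Proof.
move=> p0 p1 d0 z0; rewrite /phi.
have zdd : 0 <= z + d + d by rewrite !addr_ge0.
have := mid_ccv _ _ _ p0 p1 z0 zdd.
have -> : 2^-1 * z + 2^-1 * (z + d + d) = z + d.
  by rewrite -mulrDr (_ : z + (z + d + d) = 2 * (z + d)) ?mulKf ?pnatr_eq0 //; ring.
move=> H; lra.
Qed.

Lemma phi_mono_cvx p d z (m : nat) : 1 <= p -> 0 <= d -> 0 <= z ->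
  phi p d z <= phi p d (z + m%:R * d).
Proof.
move=> p1 d0 z0; elim: m => [|m IH]; first by rewrite mul0r addr0.
apply: (le_trans IH); rewrite -addn1 natrD mulrDl mul1r addrA.
by apply: phi_step_cvx => //; rewrite addr_ge0 // mulr_ge0.
Qed.

Lemma phi_mono_ccv p d z (m : nat) : 0 < p -> p <= 1 -> 0 <= d -> 0 <= z ->
  phi p d (z + m%:R * d) <= phi p d z.
Proof.
move=> p0 p1 d0 z0; elim: m => [|m IH]; first by rewrite mul0r addr0.
apply: le_trans IH; rewrite -addn1 natrD mulrDl mul1r addrA.
by apply: phi_step_ccv => //; rewrite addr_ge0 // mulr_ge0.
Qed.

Definition cexpr p (u v s t : R) :=
  `|v - s| `^ p - `|v - t| `^ p + `|u - t| `^ p - `|u - s| `^ p.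

Lemma cexpr_in p (u v s t : R) : 0 < p -> u <= s -> s <= t -> t <= v -> 0 <= cexpr p u v s t.
Proof.
move=> p0 us st tv; rewrite /cexpr.
have h1 : `|v - t| `^ p <= `|v - s| `^ p.
  apply: (ge0_ler_powR (ltW p0)); rewrite ?nnegrE //.
  rewrite !ger0_norm ?subr_ge0 ?(le_trans st) //; lra.
have h2 : `|u - s| `^ p <= `|u - t| `^ p.
  apply: (ge0_ler_powR (ltW p0)); rewrite ?nnegrE //.
  rewrite !(distrC u) !ger0_norm ?subr_ge0 ?(le_trans us) //; lra.
lra.
Qed.

Lemma cexpr_out p d (u v s : R) (m : nat) : 0 < p -> 0 <= d -> 0 <= s -> 0 <= u ->
  v = u + m%:R * d -> (s + d <= u \/ v <= s) ->
  (1 <= p -> 0 <= cexpr p u v s (s + d)) /\ (p <= 1 -> cexpr p u v s (s + d) <= 0).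
Proof.
move=> p0 d0 s0 u0 vE.
have md0 : 0 <= m%:R * d by rewrite mulr_ge0.
case=> [tu|vs].
- have e : cexpr p u v s (s + d) = phi p d (u - (s + d) + m%:R * d) - phi p d (u - (s + d)).
    rewrite /cexpr /phi vE !ger0_norm.
    + have E1 : u + m%:R * d - s = u - (s + d) + m%:R * d + d by ring.
      have E2 : u + m%:R * d - (s + d) = u - (s + d) + m%:R * d by ring.
      have E3 : u - s = u - (s + d) + d by ring.
      rewrite E1 E2 E3; ring.
    all: try lra.
  have z0 : 0 <= u - (s + d) by rewrite subr_ge0.
  rewrite e; split => hp.
  + by rewrite subr_ge0 phi_mono_cvx.
  + by rewrite subr_le0 phi_mono_ccv.
- have e : cexpr p u v s (s + d) = phi p d (s - v + m%:R * d) - phi p d (s - v).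
    rewrite /cexpr /phi vE !ler0_norm.
    + have E1 : - (u + m%:R * d - s) = s - (u + m%:R * d) by ring.
      have E2 : - (u + m%:R * d - (s + d)) = s - (u + m%:R * d) + d by ring.
      have E3 : - (u - (s + d)) = s - (u + m%:R * d) + m%:R * d + d by ring.
      have E4 : - (u - s) = s - (u + m%:R * d) + m%:R * d by ring.
      rewrite E1 E2 E3 E4; ring.
    all: try lra.
  have z0 : 0 <= s - v by rewrite subr_ge0.
  rewrite e; split => hp.
  + by rewrite subr_ge0 phi_mono_cvx.
  + by rewrite subr_le0 phi_mono_ccv.
Qed.

End A.

Section D.
Context {R : realType}.

Lemma sum_blocks (F : nat -> R) (N b : nat) :
  \sum_(1 <= j < (N * b).+1) F j =
  \sum_(1 <= i < N.+1) \sum_(((i.-1) * b).+1 <= j < (i * b).+1) F j.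
Proof.
elim: N => [|N IH]; first by rewrite mul0n !big_geq.
rewrite (big_nat_recr N.+1) //= -IH (big_cat_nat _ (n := (N * b).+1)) //.
by rewrite ltnS mulSn leq_addl.
Qed.

Lemma tele2 (g : nat -> R) (lo hi : nat) : (lo <= hi)%N ->
  \sum_(lo.+1 <= j < hi.+1) (g j - g j.-1) = g hi - g lo.
Proof.
elim: hi => [|hi IH]; first by rewrite leqn0 => /eqP ->; rewrite big_geq // subrr.
rewrite leq_eqVlt => /orP [/eqP ->|]; first by rewrite big_geq // subrr.
rewrite ltnS => /[dup] lh /IH {}IH; rewrite (big_nat_recr hi.+1) //= IH; ring.
Qed.

Lemma block_ineq (mu c : nat -> R) (lo hi : nat) (Cval : R) : (lo <= hi)%N ->
  (forall j, (lo <= j < hi)%N -> 0 <= c j) \/ (forall j, (lo <= j < hi)%N -> c j <= 0) ->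
  \sum_(lo <= j < hi) c j = Cval ->
  \sum_(lo <= j < hi) `|mu j| * `|c j| <=
  (\big[Num.max/0]_(lo <= j < hi) `|mu j|) * `|Cval|.
Proof.
move=> lohi hs <-.
set Mx := \big[Num.max/0]_(lo <= j < hi) `|mu j|.
have Mx0 : 0 <= Mx.
  rewrite /Mx; elim/big_ind: _ => //= x y x0 y0.
  by rewrite le_max x0.
apply: (@le_trans _ _ (\sum_(lo <= j < hi) Mx * `|c j|)).
  rewrite big_nat [X in _ <= X]big_nat; apply: ler_sum => j hj.
  apply: ler_wpM2r => //.
  rewrite /Mx big_nat_cond.
  have := @le_bigmax_seq _ R nat (index_iota lo hi) 0 j (fun j => (lo <= j < hi)%N && true) (fun j => `|mu j|).
  apply; first by rewrite mem_index_iota.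
  by rewrite hj.
rewrite -mulr_sumr; apply: ler_wpM2l => //.
case: hs => hs.
- rewrite ger0_norm; last by rewrite big_nat sumr_ge0.
  by rewrite big_nat [X in _ <= X]big_nat; apply: ler_sum => j hj; rewrite ger0_norm ?hs.
- rewrite ler0_norm; last by rewrite big_nat sumr_le0.
  rewrite -sumrN big_nat [X in _ <= X]big_nat; apply: ler_sum => j hj.
  by rewrite ler0_norm ?hs.
Qed.

End D.

Section E.
Context {R : realType}.

Lemma lerMr (Mr : R) (x y : nat) : 0 < Mr -> (x <= y)%N -> x%:R / Mr <= y%:R / Mr.
Proof. by move=> M0 xy; rewrite ler_pM2r ?invr_gt0 // ler_nat. Qed.

Lemma block_sign (p Mr : R) (b ku kv i : nat) : 0 < p -> 0 < Mr -> (ku <= kv)%N -> (1 <= i)%N ->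
  (forall j, ((i.-1*b).+1 <= j < (i*b).+1)%N ->
     0 <= cexpr p ((ku*b)%:R / Mr) ((kv*b)%:R / Mr) (j.-1%:R/Mr) (j%:R/Mr)) \/
  (forall j, ((i.-1*b).+1 <= j < (i*b).+1)%N ->
     cexpr p ((ku*b)%:R / Mr) ((kv*b)%:R / Mr) (j.-1%:R/Mr) (j%:R/Mr) <= 0).
Proof.
move=> p0 M0 kuv i1.
have tE : forall j, (1 <= j)%N -> j%:R / Mr = j.-1%:R / Mr + Mr^-1.
  by move=> j j1; rewrite -{1}(prednK j1) -addn1 natrD mulrDl mul1r.
have vE : (kv*b)%:R / Mr = (ku*b)%:R / Mr + ((kv - ku) * b)%N%:R * Mr^-1.
  by rewrite -mulrDl -natrD -mulnDl subnKC.
have d0 : 0 <= Mr^-1 by rewrite invr_ge0 ltW.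
have u0 : 0 <= (ku*b)%:R / Mr by rewrite divr_ge0 ?ler0n ?ltW.
case A : ((ku <= i.-1)%N && (i <= kv)%N).
- left; move=> j /andP[j1 j2]; move/andP: A => [A1 A2].
  apply: cexpr_in => //.
  + by apply: lerMr => //; nia.
  + by apply: lerMr => //; lia.
  + by apply: lerMr => //; nia.
- have out : forall j, ((i.-1*b).+1 <= j < (i*b).+1)%N ->
      j.-1%:R / Mr + Mr^-1 <= (ku*b)%:R / Mr \/ (kv*b)%:R / Mr <= j.-1%:R/Mr.
    move=> j /andP[j1 j2]; rewrite -tE; last by lia.
    case: (leqP i ku) => iku.
    + by left; apply: lerMr => //; nia.
    + right; apply: lerMr => //.
      have : (kv < i)%N by move: A; rewrite (_ : (ku <= i.-1)%N = true) /=; [move/negbT; rewrite -ltnNge | lia].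
      nia.
  have s0 : forall j, 0 <= j.-1%:R / Mr by move=> j; rewrite divr_ge0 ?ler0n ?ltW.
  case: (lerP p 1) => hp.
  + right; move=> j hj; rewrite (tE j); last by move: hj => /andP[]; lia.
    exact: (cexpr_out _ _ _ _ _ _ p0 d0 (s0 j) u0 vE (out j hj)).2 hp.
  + left; move=> j hj; rewrite (tE j); last by move: hj => /andP[]; lia.
    exact: (cexpr_out _ _ _ _ _ _ p0 d0 (s0 j) u0 vE (out j hj)).1 (ltW hp).
Qed.

End E.

Lemma incr_cov_formula (d : measure_display) (T : measurableType d) (R : realType)
  (P : probability T R) (H : R) (W : R -> T -> R) (a b v u : R) :
  is_fBm P H W -> 0 <= a -> 0 <= b -> 0 <= v -> 0 <= u ->
  incr_cov P W a b v u =
  fbm_cov H a v - fbm_cov H a u - fbm_cov H b v + fbm_cov H b u.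
Proof.
case=> _ L2 E _ a0 b0 v0 u0; rewrite /incr_cov.
have L1 : forall x y, 0 <= x -> 0 <= y -> (W x \* W y) \in Lfun P 1.
  by move=> x y x0 y0; apply: Lfun2_mul_Lfun1; apply: L2.
have -> : (fun w => (W a w - W b w) * (W v w - W u w)) =
   ((W a \* W v) \- (W a \* W u)) \- ((W b \* W v) \- (W b \* W u)).
  by apply/funext => w /=; ring.
rewrite expectationB; last 2 first.
- by apply: rpredB; apply: L1.
- by apply: rpredB; apply: L1.
rewrite !expectationB ?L1 // !E //.
rewrite -!EFinB /=; ring.
Qed.

Theorem lemma3p7 (d : measure_display) (T : measurableType d) (R : realType)
  (P : probability T R) (H : R) (W : R -> T -> R)
  (b n : nat) (u v : R) (mu : nat -> R) :
  0 < H < 1 -> is_fBm P H W -> (2 <= b)%N ->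
  0 <= u -> u <= v -> v <= 1 ->
  (exists k : int, u * b%:R ^+ n = k%:~R) ->
  (exists k : int, v * b%:R ^+ n = k%:~R) ->
  \sum_(1 <= j < (b ^ n.+1).+1)
     `|mu j| * `|incr_cov P W (j%:R / b%:R ^+ n.+1) (j.-1%:R / b%:R ^+ n.+1) v u|
  <= \sum_(1 <= i < (b ^ n).+1)
     (\big[Num.max/0]_(((i.-1) * b).+1 <= j < (i * b).+1) `|mu j|) *
     `|incr_cov P W (i%:R / b%:R ^+ n) (i.-1%:R / b%:R ^+ n) v u|.
Proof.
move=> /andP[H0 H1] hW b2 u0 uv v1 hku hkv.
have v0 : 0 <= v by apply: le_trans uv.
have B0 : 0 < (b%:R : R) by rewrite ltr0n; lia.
have N0 : 0 < (b%:R : R) ^+ n by rewrite exprn_gt0.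
have M0 : 0 < (b%:R : R) ^+ n.+1 by rewrite exprn_gt0.
have natk : forall x : R, 0 <= x -> (exists k : int, x * b%:R ^+ n = k%:~R) ->
    exists k : nat, x = (k * b)%:R / b%:R ^+ n.+1.
  move=> x x0 [[m|m] h].
  - exists m; rewrite natrM exprSr -[m%:R]/((Posz m)%:~R) -h; field.
    by rewrite !gt_eqF.
  - exfalso; have : 0 <= (Negz m)%:~R :> R by rewrite -h mulr_ge0 // ltW.
    by rewrite ler0z.
have [ku hu] := natk u u0 hku.
have [kv hv] := natk v v0 hkv.
have kuv : (ku <= kv)%N.
  by move: uv; rewrite hu hv ler_pM2r ?invr_gt0 // ler_nat leq_pmul2r //; lia.
have covE : forall a c : R, 0 <= a -> 0 <= c ->
    incr_cov P W a c v u = cexpr (2 * H) u v c a / 2.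
  by move=> a c a0 c0; rewrite (@incr_cov_formula _ _ _ P H W) // /cexpr /fbm_cov; ring.
have p0 : 0 < 2 * H by rewrite mulr_gt0.
under eq_big_nat => j hj do rewrite covE ?divr_ge0 ?ler0n ?ltW //.
rewrite expnSr sum_blocks big_nat [X in _ <= X]big_nat; apply: ler_sum => i /andP[i1 iN].
set gg := fun k : nat => (`|u - k%:R / b%:R ^+ n.+1| `^ (2 * H) - `|v - k%:R / b%:R ^+ n.+1| `^ (2 * H)) / 2.
apply: (block_ineq mu (fun j => cexpr (2 * H) u v (j.-1%:R / b%:R ^+ n.+1) (j%:R / b%:R ^+ n.+1) / 2)).
- by rewrite ltnS leq_mul2r leq_pred orbT.
- have [hs|hs] := @block_sign R (2 * H) _ b ku kv i p0 M0 kuv i1; [left|right] => j hj;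
    have := hs j hj; rewrite -hu -hv; lra.
- rewrite (eq_big_nat _ _ (F2 := fun j => gg j - gg j.-1)); last first.
    by move=> j hj; rewrite /gg /cexpr; ring.
  rewrite tele2; last by rewrite leq_mul2r leq_pred orbT.
  rewrite /gg /cexpr.
  have e1 : (i * b)%:R / b%:R ^+ n.+1 = i%:R / b%:R ^+ n :> R.
    by rewrite natrM exprSr; field; rewrite !gt_eqF.
  have e2 : (i.-1 * b)%:R / b%:R ^+ n.+1 = i.-1%:R / b%:R ^+ n :> R.
    by rewrite natrM exprSr; field; rewrite !gt_eqF.
  rewrite e1 e2 covE ?divr_ge0 ?ler0n ?ltW // /cexpr; ring.
Qed.
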